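(* Let $k$ be a field, $V$ a $k$-vector space, and $\varphi\in\operatorname{End}_k(V)$ a finite potent endomorphism. Then the Drazin inverse $\varphi^D$ of $\varphi$ is a G-Drazin inverse of $\varphi$ if and only if $i(\varphi)\le 1$.
   Context: An endomorphism $\varphi$ of a $k$-vector space $V$ is finite potent if $\varphi^n(V)$ is finite dimensional for some $n$. For such $\varphi$, the AST-decomposition is $V=U_\varphi\oplus W_\varphi$ where $U_\varphi=\{v\in V: \varphi^m(v)=0 \text{ for some } m\}$ and $W_\varphi=\{v\in V: p(\varphi)(v)=0 \text{ for some } p(x)\in k[x] \text{ coprime to } x\}$; $\varphi|_{U_\varphi}$ is nilpotent, $W_\varphi$ is finite dimensional and $\varphi|_{W_\varphi}$ is an automorphism. The index $i(\varphi)$ is the nilpotency order of $\varphi|_{U_\varphi}$. The Drazin inverse $\varphi^D$ is the linear map equal to $(\varphi|_{W_\varphi})^{-1}$ on $W_\varphi$ and to $0$ on $U_\varphi$. An endomorphism $\psi$ is a G-Drazin inverse of $\varphi$ if $\varphi\circ\psi\circ\varphi=\varphi$ and $\psi\circ\varphi^{r}=\varphi^{r}\circ\psi$ with $r=i(\varphi)$. *)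

(* Defs.v *)
From HB Require Import structures.
From mathcomp Require Import all_boot all_order all_algebra.
Set Implicit Arguments. Unset Strict Implicit. Unset Printing Implicit Defensive.
Import GRing.Theory.
Local Open Scope ring_scope.

Section FinitePotent.
Variables (k : fieldType) (V : lmodType k).

Definition in_span (s : seq V) (v : V) : Prop :=
  exists c : 'I_(size s) -> k, v = \sum_(i < size s) c i *: s`_i.

(* phi^n(V) is finite dimensional (contained in a finitely generated subspace). *)
Definition finite_potent (phi : V -> V) : Prop :=
  exists n : nat, exists s : seq V,
    forall w : V, in_span s (iter n phi w).

Definition poly_endo (p : {poly k}) (phi : V -> V) (v : V) : V :=
  \sum_(i < size p) p`_i *: iter i phi v.

Definition U_sp (phi : V -> V) (v : V) : Prop :=
  exists m : nat, iter m phi v = 0.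

Definition W_sp (phi : V -> V) (v : V) : Prop :=
  exists p : {poly k}, coprimep p 'X /\ poly_endo p phi v = 0.

Definition is_index (phi : V -> V) (r : nat) : Prop :=
  (forall u, U_sp phi u -> iter r phi u = 0) /\
  (forall m, (forall u, U_sp phi u -> iter m phi u = 0) -> (r <= m)%N).

Definition is_drazin_inverse (phi psi : V -> V) : Prop :=
  linear psi /\
  (forall u, U_sp phi u -> psi u = 0) /\
  (forall w, W_sp phi w -> W_sp phi (psi w) /\ phi (psi w) = w).

Definition is_G_drazin_inverse (phi psi : V -> V) (r : nat) : Prop :=
  (forall v, phi (psi (phi v)) = phi v) /\
  (forall v, psi (iter r phi v) = iter r phi (psi v)).

End FinitePotent.

(* Main.v *)
Set Warnings "-all".
Require Import Defs.
From HB Require Import structures.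
From mathcomp Require Import all_boot all_order all_algebra.
From mathcomp Require Import zify.
From Stdlib Require Import Classical ClassicalEpsilon.

Import GRing.Theory.
Set Implicit Arguments. Unset Strict Implicit.

Section Aux.
Local Open Scope ring_scope.
Variables (k : fieldType) (V : lmodType k) (phi : {linear V -> V}).

Implicit Types (p q : {poly k}) (v x y w u : V).
Local Notation PE p := (poly_endo p phi).

Lemma iterB n x y : iter n phi (x - y) = iter n phi x - iter n phi y.
Proof. by elim: n => //= n ->; rewrite linearB. Qed.

Lemma iterDv n x y : iter n phi (x + y) = iter n phi x + iter n phi y.
Proof. by elim: n => //= n ->; rewrite linearD. Qed.

Lemma iter0v n : iter n phi 0 = 0.
Proof. by elim: n => //= n ->; rewrite linear0. Qed.

Lemma PE_wide p n v : (size p <= n)%N -> PE p v = \sum_(i < n) p`_i *: iter i phi v.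
Proof.
move=> le; rewrite /poly_endo (big_ord_widen n (fun i => p`_i *: iter i phi v) le).
rewrite big_mkcond; apply: eq_bigr => i _.
case: ifP => // /negbT; rewrite -leqNgt => h.
by rewrite nth_default // scale0r.
Qed.
Arguments PE_wide : clear implicits.

Lemma PE_add p q v : PE (p + q) v = PE p v + PE q v.
Proof.
set n := maxn (size p) (size q).
rewrite (PE_wide (p+q) n); last by rewrite (leq_trans (size_polyD _ _)).
rewrite (PE_wide p n) ?leq_maxl // (PE_wide q n) ?leq_maxr //.
by rewrite -big_split; apply: eq_bigr => i _; rewrite coefD scalerDl.
Qed.

Lemma PE_C c v : PE c%:P v = c *: v.
Proof.
by rewrite (PE_wide _ 1) ?size_polyC_leq1 // big_ord1 coefC.
Qed.

Lemma PE_Z c p v : PE (c *: p) v = c *: PE p v.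
Proof.
rewrite (PE_wide _ (size p)) ?size_scale_leq // /poly_endo scaler_sumr.
by apply: eq_bigr => i _; rewrite coefZ scalerA.
Qed.

Lemma PE_0 v : PE 0 v = 0.
Proof. by rewrite /poly_endo size_poly0 big_ord0. Qed.

Lemma PE_MX p v : PE (p * 'X) v = PE p (phi v).
Proof.
have le : (size (p * 'X)%R <= (size p).+1)%N.
  by rewrite (leq_trans (size_mul_leq _ _)) // size_polyX addn2.
rewrite (PE_wide _ _ _ le) big_ord_recl coefMX /= scale0r add0r /poly_endo.
by apply: eq_bigr => i _; rewrite coefMX /= add0n -iterS iterSr.
Qed.

Lemma PE_phi p v : phi (PE p v) = PE p (phi v).
Proof.
rewrite /poly_endo linear_sum; apply: eq_bigr => i _.
by rewrite linearZ /= -iterS iterSr.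
Qed.

Lemma PE_M p q v : PE (p * q) v = PE p (PE q v).
Proof.
elim/poly_ind: p q v => [|p c IH] q v; first by rewrite mul0r !PE_0.
rewrite mulrDl -mulrA PE_add IH PE_add PE_MX mul_polyC PE_Z PE_C.
by rewrite mulrC PE_MX PE_phi.
Qed.

Lemma PE_Xn n v : PE ('X^n) v = iter n phi v.
Proof.
elim: n v => [|n IH] v; first by rewrite expr0 -polyC1 PE_C scale1r.
by rewrite exprSr PE_MX IH iterSr.
Qed.

Lemma PE0v p : PE p 0 = 0.
Proof. by rewrite /poly_endo big1 // => i _; rewrite iter0v scaler0. Qed.

Lemma PE_B p x y : PE p (x - y) = PE p x - PE p y.
Proof.
by rewrite /poly_endo -sumrB; apply: eq_bigr => i _; rewrite iterB scalerBr.
Qed.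

Lemma PE_comm p q v : PE p (PE q v) = PE q (PE p v).
Proof. by rewrite -!PE_M mulrC. Qed.

Lemma coprimeX0 p : coprimep p 'X -> p`_0 != 0.
Proof.
have := coprimep_XsubC p 0; rewrite polyC0 subr0 => -> .
by rewrite rootE horner_coef0.
Qed.

Lemma W_phi w : W_sp phi w -> W_sp phi (phi w).
Proof.
by move=> [p [cp Hp]]; exists p; split => //; rewrite -PE_phi Hp linear0.
Qed.

Lemma W_sub w1 w2 : W_sp phi w1 -> W_sp phi w2 -> W_sp phi (w1 - w2).
Proof.
move=> [p1 [c1 H1]] [p2 [c2 H2]]; exists (p1 * p2); split.
  by rewrite coprimepMl c1 c2.
by rewrite PE_B !PE_M H2 PE_comm H1 !PE0v subrr.
Qed.

Lemma W0 w : W_sp phi w -> phi w = 0 -> w = 0.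
Proof.
move=> [p [cp Hp]] hw.
have h0 := coprimeX0 cp.
move: Hp; rewrite (PE_wide _ (size p).+1) // big_ord_recl /=.
rewrite big1 ?addr0 => [h|i _]; last by rewrite -iterS iterSr hw iter0v scaler0.
by rewrite -[w]scale1r -(mulVf h0) -scalerA h scaler0.
Qed.

Lemma U_iter u j : U_sp phi u -> U_sp phi (iter j phi u).
Proof. by move=> [m Hm]; exists m; rewrite -iterD addnC iterD Hm iter0v. Qed.

Lemma step1 (Hfp : finite_potent phi) v :
  exists N p, coprimep p 'X /\ PE p (iter N phi v) = 0.
Proof.
case: Hfp => n [s Hs]; set m := size s.
have cj : forall j : 'I_m.+1,
   {c : 'I_m -> k | iter j phi (iter n phi v) = \sum_(i < m) c i *: s`_i}.
  move=> j; apply: constructive_indefinite_description.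
  have [c Hc] := Hs (iter j phi v); exists c.
  by rewrite -Hc -!iterD addnC.
pose C : 'M[k]_(m.+1, m) := \matrix_(j, i) proj1_sig (cj j) i.
have Knz : kermx C != 0.
  by rewrite -mxrank_eq0 mxrank_ker subn_eq0 -ltnNge ltnS rank_leq_col.
have [i Hi] : exists i, row i (kermx C) != 0.
  apply/existsP; move: Knz; apply: contraNT; rewrite negb_exists => /forallP H.
  apply/eqP/row_matrixP => i; rewrite row0; apply/eqP.
  by have := H i; rewrite negbK.
set x := row i (kermx C) in Hi.
have xC : x *m C = 0 by apply/sub_kermxP; rewrite row_sub.
pose q : {poly k} := \poly_(j < m.+1) x 0 (inord j).
have qnz : q != 0.
  apply: contraNneq Hi => Hq; apply/eqP/rowP => j.
  have := congr1 (fun p : {poly k} => p`_j) Hq.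
  by rewrite coef_poly ltn_ord coef0 inord_val !mxE => ->.
have Hq : PE q (iter n phi v) = 0.
  rewrite (PE_wide _ _ _ (size_poly _ _)).
  transitivity (\sum_(j < m.+1) x 0 j *: \sum_(i0 < m) C j i0 *: s`_i0).
    apply: eq_bigr => j _; rewrite coef_poly ltn_ord inord_val.
    by rewrite (proj2_sig (cj j)); congr (_ *: _); apply: eq_bigr => i0 _; rewrite mxE.
  under eq_bigr => j _ do rewrite scaler_sumr.
  rewrite exchange_big /= big1 // => i0 _.
  rewrite (eq_bigr (fun j => (x 0 j * C j i0) *: s`_i0)); last by move=> j _; rewrite scalerA.
  rewrite -scaler_suml.
  by have := congr1 (fun M : 'rV_m => M 0 i0) xC; rewrite !mxE => ->; rewrite scale0r.
have [a [q1 Hq1 Hqe]] := multiplicity_XsubC q 0.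
rewrite polyC0 subr0 in Hqe.
exists (a + n)%N, q1; split.
  have := coprimep_XsubC q1 0; rewrite polyC0 subr0 => ->.
  exact: (implyP Hq1 qnz).
by rewrite iterD -PE_Xn -PE_M -Hqe.
Qed.

Lemma decomp (Hfp : finite_potent phi) v :
  exists u w, U_sp phi u /\ W_sp phi w /\ v = u + w.
Proof.
have [N [p [cp Hp]]] := step1 Hfp v.
have cp' : coprimep ('X^N) p by apply: coprimep_expl; rewrite coprimep_sym.
have [[A B] /= HAB] := Bezout_eq1_coprimepP _ _ cp'.
exists (PE (B * p) v), (PE (A * 'X^N) v); split; [|split].
- by exists N; rewrite -PE_Xn PE_comm !PE_M PE_Xn Hp PE0v.
- exists p; split => //.
  by rewrite PE_comm !PE_M (PE_comm _ p) PE_Xn Hp PE0v.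
- by rewrite -PE_add addrC HAB -polyC1 PE_C scale1r.
Qed.


End Aux.

Theorem corollary3p13 (k : fieldType) (V : lmodType k) (phi : {linear V -> V})
  (Hfp : finite_potent phi) (r : nat) (Hr : is_index phi r)
  (phiD : V -> V) (HD : is_drazin_inverse phi phiD) :
  is_G_drazin_inverse phi phiD r <-> (r <= 1)%N.
Proof.
Local Open Scope ring_scope.
case: HD => [Dlin [DU DW]].
have DD : forall x y : V, phiD (x + y)%R = (phiD x + phiD y)%R.
  by move=> x y; have := Dlin 1 x y; rewrite !scale1r.
split.
- move=> [H1 H2]; rewrite leqNgt; apply/negP => r2.
  have [u [Uu Hu]] : exists u, U_sp phi u /\ iter r.-1 phi u <> 0.
    apply: NNPP => Hn.
    have : (r <= r.-1)%N.
      apply: (proj2 Hr) => u Uu; apply: NNPP => Hne; apply: Hn; by exists u.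
    by move: r2; case: (r) => [|r'] //=; rewrite ltnn.
  apply: Hu.
  have E : iter r.-1 phi u = phi (iter r.-2 phi u).
    by rewrite -iterS; congr iter; move: r2; case: (r) => [|[|r']].
  have := H1 (iter r.-2 phi u); rewrite -E DU ?linear0 //.
  rewrite E; exact: (U_iter 1 (U_iter _ Uu)).
- move=> r1.
  have Uk : forall u, U_sp phi u -> phi u = 0.
    move=> u Uu; have := proj1 Hr u Uu.
    by move: r1; case: (r) => [|[|?]] //= _ ->; rewrite linear0.
  have key : forall w, W_sp phi w -> phiD (phi w) = w.
    move=> w Ww; have [Wd Hd] := DW _ (W_phi Ww).
    apply/eqP; rewrite -subr_eq0; apply/eqP; apply: (W0 (W_sub Wd Ww)).
    by rewrite linearB /= Hd subrr.
  split.
  + move=> v; have [u [w [Uu [Ww ->]]]] := decomp Hfp v.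
    by rewrite linearD /= (Uk u Uu) add0r key.
  + move=> v; move: r1; case: (r) => [|[|?]] //= _.
    have [u [w [Uu [Ww ->]]]] := decomp Hfp v.
    by rewrite linearD /= (Uk u Uu) add0r key // DD (DU u Uu) add0r (proj2 (DW _ Ww)).
Qed.
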